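(* Let $\mathcal{A}$ be a pOC with state set $Q$ and let $p,q\in Q$ be such that $[p{\downarrow}q]>0$ and $q$ is not in a bottom strongly connected component of $\mathcal{X}$. Then $$E(p{\downarrow}q)\le \frac{5|Q|}{x_{\min}^{|Q|+|Q|^3}}.$$
   Context: A pOC is $\mathcal{A}=(Q,\delta^{=0},\delta^{>0},P^{=0},P^{>0})$ with the following components. - $Q$ is a finite set of states. - $\delta^{>0}\subseteq Q\times\{-1,0,1\}\times Q$ is the set of positive rules and $\delta^{=0}\subseteq Q\times\{0,1\}\times Q$ is the set of zero rules. Every state has an outgoing positive rule and an outgoing zero rule. - $P^{>0}$ and $P^{=0}$ assign to each state a positive rational probability distribution over its outgoing positive rules and over its outgoing zero rules, respectively. The Markov chain $\mathcal{M}_\mathcal{A}$ on configurations $p(i)$ has the following transitions: - $p(0)\to q(c)$ with probability $P^{=0}(p,c,q)$; - for $i\ge1$, $p(i)\to q(i+c)$ with probability $P^{>0}(p,c,q)$. $\mathrm{Run}(p{\downarrow}q)$ is the set of runs from $p(1)$ that visit $q(0)$ with the counter positive before that visit, and $[p{\downarrow}q]$ is its probability. $E(p{\downarrow}q)$ is the conditional expected number of transitions until the first visit of $q(0)$, given $\mathrm{Run}(p{\downarrow}q)$. $\mathcal{X}$ is the underlying finite Markov chain of $\mathcal{A}$. Its state set is $Q$ and its transition matrix is $A$ with $A_{pq}=\sum_{c}P^{>0}(p,c,q)$. $x_{\min}$ is the least positive probability used in the rules of $\mathcal{A}$. *)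

(* Defs.v *)
From HB Require Import structures.
From mathcomp Require Import all_boot all_order all_algebra.
From mathcomp Require Import all_classical all_reals all_analysis.
Set Implicit Arguments. Unset Strict Implicit. Unset Printing Implicit Defensive.
Import Order.TTheory GRing.Theory Num.Theory.
Local Open Scope ring_scope.

Definition pos_moves : seq int := [:: -1; 0; 1].
Definition zero_moves : seq int := [:: 0; 1].

(* Pp s c t = P^{>0}(s,c,t), Pz s c t = P^{=0}(s,c,t); the rule sets
   delta^{>0}, delta^{=0} are the supports of Pp and Pz. *)
Record pOC (Q : finType) := POC {
  Pp : Q -> int -> Q -> rat;
  Pz : Q -> int -> Q -> rat;
  Pp_ge0 : forall s c t, 0 <= Pp s c t;
  Pz_ge0 : forall s c t, 0 <= Pz s c t;
  Pp_supp : forall s c t, Pp s c t != 0 -> c \in pos_moves;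
  Pz_supp : forall s c t, Pz s c t != 0 -> c \in zero_moves;
  Pp_sum : forall s, \sum_(c <- pos_moves) \sum_(t : Q) Pp s c t = 1;
  Pz_sum : forall s, \sum_(c <- zero_moves) \sum_(t : Q) Pz s c t = 1
}.

Section POC.
Variables (Q : finType) (A : pOC Q).

Definition pos_rule s c t := 0 < Pp A s c t.
Definition zero_rule s c t := 0 < Pz A s c t.

(* x_min: least positive probability used in the rules of A
   (all probabilities are <= 1, so 1 is a neutral default). *)
Definition xmin : rat :=
  Num.min
    (\big[Num.min/1]_(s : Q) \big[Num.min/1]_(t : Q) \big[Num.min/1]_(c <- pos_moves)
        (if 0 < Pp A s c t then Pp A s c t else 1))
    (\big[Num.min/1]_(s : Q) \big[Num.min/1]_(t : Q) \big[Num.min/1]_(c <- zero_moves)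
        (if 0 < Pz A s c t then Pz A s c t else 1)).

Definition Xmat (s t : Q) : rat := \sum_(c <- pos_moves) Pp A s c t.
Definition Xedge : rel Q := fun s t => 0 < Xmat s t.

Definition in_BSCC (q : Q) : bool :=
  [forall r, connect Xedge q r ==> connect Xedge r q].

(* hit q n s i = probability that the run of M_A from s(i) visits q(0) at step
   exactly n, with the counter positive at all steps before n.  Before that
   visit only positive rules are used. *)
Fixpoint hit (q : Q) (n : nat) (s : Q) (i : int) : rat :=
  match n with
  | 0 => ((s == q) && (i == 0))%:R
  | n'.+1 => if 0 < i then
               \sum_(c <- pos_moves) \sum_(t : Q) Pp A s c t * hit q n' t (i + c)
             else 0
  end.

Local Open Scope ereal_scope.

(* [p down q]: probability of Run(p down q) (a disjoint union over the
   step n of the first visit to q(0)). *)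
Definition prob_down {R : realType} (p q : Q) : \bar R :=
  \sum_(0 <= n <oo) (ratr (hit q n p 1) : R)%:E.

Definition exp_down {R : realType} (p q : Q) : \bar R :=
  (\sum_(0 <= n <oo) ((n%:R * ratr (hit q n p 1)) : R)%:E)
  * ((fine (prob_down p q))^-1)%:E.

End POC.

(* Main.v *)
Require Import Defs.
From HB Require Import structures.
From mathcomp Require Import all_boot all_order all_algebra.
From mathcomp Require Import all_classical all_reals all_analysis.
From mathcomp Require Import ring lra zify.
Set Implicit Arguments. Unset Strict Implicit. Unset Printing Implicit Defensive.
Import Order.TTheory GRing.Theory Num.Theory.
Local Open Scope ring_scope.

Lemma sum_neq0 (T : eqType) (r : seq T) (F : T -> rat) :
  \sum_(i <- r) F i != 0 -> exists2 i, i \in r & F i != 0.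
Proof.
elim: r => [|a r IH]; first by rewrite big_nil eqxx.
rewrite big_cons; have [Fa|Fa] := eqVneq (F a) 0.
  by rewrite Fa add0r => /IH [i ir Fi]; exists i => //; rewrite inE ir orbT.
by move=> _; exists a => //; rewrite inE eqxx.
Qed.

Section S.
Variables (Q : finType) (A : pOC Q) (q : Q).

Lemma hit_ge0 n s i : 0 <= hit A q n s i.
Proof.
elim: n s i => [|n IH] s i /=; first by rewrite ler0n.
case: ifP => // _; apply: sumr_ge0 => c _; apply: sumr_ge0 => t _.
by apply: mulr_ge0; [exact: Pp_ge0|exact: IH].
Qed.

Lemma Xmat_ge0 s t : 0 <= Xmat A s t.
Proof. by apply: sumr_ge0 => c _; exact: Pp_ge0. Qed.

Lemma Xmat_sum s : \sum_t Xmat A s t = 1.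
Proof. by rewrite /Xmat exchange_big /= Pp_sum. Qed.

Lemma Pp_Xedge s c t : 0 < Pp A s c t -> Xedge A s t.
Proof.
move=> H; rewrite /Xedge /Xmat.
have cm : c \in pos_moves by apply: (@Pp_supp _ A s c t); rewrite gt_eqF.
rewrite (bigD1_seq c) //=; apply: ltr_wpDr => //.
by apply: sumr_ge0 => c' _; exact: Pp_ge0.
Qed.

Lemma hit_T n s i : hit A q n s i != 0 -> connect (Xedge A) s q.
Proof.
elim: n s i => [|n IH] s i /=.
  by case: (eqVneq s q) => [-> _|ne]; [exact: connect0|rewrite eqxx].
case: ifP => [_|]; last by rewrite eqxx.
case/sum_neq0 => c _ /sum_neq0 [t _ H].
have H1 : Pp A s c t != 0 by apply: contraNneq H => ->; rewrite mul0r.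
have H2 : hit A q n t (i + c) != 0 by apply: contraNneq H => ->; rewrite mulr0.
apply: connect_trans (IH _ _ H2); apply: connect1; apply: (@Pp_Xedge s c t).
by rewrite lt_neqAle eq_sym H1 Pp_ge0.
Qed.


Lemma hitS n s i : hit A q n.+1 s i =
  if 0 < i then \sum_(c <- pos_moves) \sum_t Pp A s c t * hit A q n t (i + c) else 0.
Proof. by []. Qed.

Lemma sum_hitS N s i (F : nat -> nat) :
  \sum_(0 <= m < N) hit A q (F m).+1 s i =
  if 0 < i then \sum_(c <- pos_moves) \sum_t Pp A s c t *
                   \sum_(0 <= m < N) hit A q (F m) t (i + c) else 0.
Proof.
case: ifP => hi; last by rewrite big1 // => m _; rewrite hitS hi.
under eq_bigr do rewrite hitS hi.
rewrite exchange_big; apply: eq_bigr => c _.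
rewrite exchange_big; apply: eq_bigr => t _.
by rewrite mulr_sumr.
Qed.

Lemma hit_tot N s i : \sum_(0 <= m < N) hit A q m s i <= 1.
Proof.
elim: N s i => [|N IH] s i; first by rewrite big_geq.
rewrite big_nat_recl // (sum_hitS N s i id) /=.
case: ifP => hi.
  rewrite (negbTE (lt0r_neq0 hi)) andbF add0r.
  rewrite -(Pp_sum A s); apply: ler_sum => c _; apply: ler_sum => t _.
  by rewrite -[X in _ <= X]mulr1; apply: ler_wpM2l; [exact: Pp_ge0|exact: IH].
by rewrite addr0; case: (_ && _).
Qed.

End S.
Lemma bigmin_le (T : eqType) (r : seq T) (P : pred T) (F : T -> rat) x :
  x \in r -> P x -> \big[Num.min/1]_(i <- r | P i) F i <= F x.
Proof.
elim: r => // a r IH; rewrite inE big_cons => /orP [/eqP <- ->|xr Px].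
  by rewrite ge_min lexx.
by case: ifP => _; [rewrite ge_min (IH xr Px) orbT|exact: IH].
Qed.

Lemma bigmin_gt0 (T : eqType) (r : seq T) (P : pred T) (F : T -> rat) :
  (forall i, P i -> 0 < F i) -> 0 < \big[Num.min/1]_(i <- r | P i) F i.
Proof.
move=> H; apply: (big_ind (fun y => 0 < y)) => //.
by move=> x y hx hy; rewrite lt_min hx hy.
Qed.

Lemma bigmin_le1 (T : eqType) (r : seq T) (P : pred T) (F : T -> rat) :
  \big[Num.min/1]_(i <- r | P i) F i <= 1.
Proof.
elim: r => [|a r IH]; first by rewrite big_nil.
by rewrite big_cons; case: ifP => // _; rewrite ge_min IH orbT.
Qed.

Section S.
Variables (Q : finType) (A : pOC Q).

Lemma xmin_gt0 : 0 < xmin A.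
Proof.
rewrite /xmin lt_min; apply/andP; split;
  do 3 (apply: bigmin_gt0 => ? _); by case: ifP.
Qed.

Lemma xmin_le1 : xmin A <= 1.
Proof. by rewrite /xmin ge_min bigmin_le1. Qed.

Lemma xmin_le s c t : 0 < Pp A s c t -> xmin A <= Pp A s c t.
Proof.
move=> H.
have cm : c \in pos_moves by apply: (@Pp_supp _ A s c t); rewrite gt_eqF.
rewrite /xmin ge_min; apply/orP; left.
apply: le_trans (bigmin_le _ (mem_index_enum s) _) _ => //.
apply: le_trans (bigmin_le _ (mem_index_enum t) _) _ => //.
apply: le_trans (bigmin_le _ cm _) _ => //.
by rewrite H.
Qed.

Lemma Xmat_ge_xmin s t : Xedge A s t -> xmin A <= Xmat A s t.
Proof.
rewrite /Xedge /Xmat => H.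
have [c cm Hc] : exists2 c, c \in pos_moves & Pp A s c t != 0.
  by apply: sum_neq0; rewrite gt_eqF.
have Hp : 0 < Pp A s c t by rewrite lt_neqAle eq_sym Hc Pp_ge0.
rewrite (bigD1_seq c) //=; apply: le_trans (xmin_le Hp) _.
by rewrite lerDl; apply: sumr_ge0 => c' _; exact: Pp_ge0.
Qed.
End S.

Section U.
Variables (Q : finType) (A : pOC Q) (q : Q).

Definition Tq s := connect (Xedge A) s q.

Fixpoint u n s : rat :=
  match n with
  | 0 => (Tq s)%:R
  | n'.+1 => (Tq s)%:R * \sum_t Xmat A s t * u n' t
  end.

Lemma u_ge0 n s : 0 <= u n s.
Proof.
elim: n s => [|n IH] s /=; first exact: ler0n.
apply: mulr_ge0; first exact: ler0n.
by apply: sumr_ge0 => t _; apply: mulr_ge0; [exact: Xmat_ge0|exact: IH].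
Qed.

Lemma u_le1 n s : u n s <= 1.
Proof.
elim: n s => [|n IH] s /=; first by case: (Tq s).
rewrite -[1](mul1r 1); apply: ler_pM; first exact: ler0n.
- by apply: sumr_ge0 => t _; apply: mulr_ge0; [exact: Xmat_ge0|exact: u_ge0].
- by case: (Tq s).
rewrite -(Xmat_sum A s); apply: ler_sum => t _.
by rewrite -[X in _ <= X]mulr1; apply: ler_wpM2l; [exact: Xmat_ge0|exact: IH].
Qed.

Lemma u_T n s : ~~ Tq s -> u n s = 0.
Proof. by case: n => [|n] /= /negbTE ->; rewrite ?mul0r. Qed.

Lemma u_shift m c : 0 <= c -> (forall t, u m t <= c * u 0 t) ->
  forall n s, u (n + m) s <= c * u n s.
Proof.
move=> c0 H; elim=> [|n IH] s; first exact: H.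
rewrite addSn /= mulrCA; apply: ler_wpM2l; first exact: ler0n.
rewrite mulr_sumr; apply: ler_sum => t _.
rewrite mulrCA; apply: ler_wpM2l; [exact: Xmat_ge0|exact: IH].
Qed.

Lemma u_mono n s : u n.+1 s <= u n s.
Proof.
rewrite -addn1 -[X in _ <= X]mul1r; apply: u_shift => // t. rewrite [u 1 t]/u [u 0 _]/u.
rewrite mul1r -[X in _ <= X]mulr1; apply: ler_wpM2l; first exact: ler0n.
rewrite -[X in _ <= X](Xmat_sum A t); apply: ler_sum => t' _.
rewrite -[X in _ <= X]mulr1; apply: ler_wpM2l; first exact: Xmat_ge0.
by case: (Tq t').
Qed.

Lemma u_monoD n r s : u (r + n) s <= u n s.
Proof.
elim: r => // r IH; rewrite addSn; exact: le_trans (u_mono _ _) IH.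
Qed.

Lemma u_exit t pth : path (Xedge A) t pth -> ~~ Tq (last t pth) ->
  u (size pth) t <= 1 - xmin A ^+ size pth.
Proof.
elim: pth t => [|t1 pth IH] t /=; first by by move=> _ /negbTE ->; rewrite expr0 subrr.
case/andP => e pth_ok /(IH _ pth_ok) Ht1.
set n := size pth.
have x0 := xmin_gt0 A; have x1 := xmin_le1 A.
have S1 : \sum_t' Xmat A t t' * u n t' <= 1 - xmin A ^+ n.+1.
  have S0 := Xmat_sum A t; rewrite (bigD1 t1) //= in S0.
  rewrite (bigD1 t1) //=.
  have L1 : \sum_(i | i != t1) Xmat A t i * u n i <= \sum_(i | i != t1) Xmat A t i.
    apply: ler_sum => i _; rewrite -[X in _ <= X]mulr1.
    by apply: ler_wpM2l; [exact: Xmat_ge0|exact: u_le1].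
  have L2 : Xmat A t t1 * u n t1 <= Xmat A t t1 * (1 - xmin A ^+ n).
    by apply: ler_wpM2l; [exact: Xmat_ge0|].
  have L3 : xmin A * xmin A ^+ n <= Xmat A t t1 * xmin A ^+ n.
    by apply: ler_wpM2r; [exact: (exprn_ge0 _ (ltW x0))|exact: Xmat_ge_xmin].
  rewrite exprS; lra.
case: (Tq t) => /=; rewrite ?mul1r // mul0r subr_ge0.
by apply: exprn_ile1 => //; exact: ltW.
Qed.


Lemma u_k t : Tq t -> ~~ in_BSCC A q -> u #|Q| t <= 1 - xmin A ^+ #|Q|.
Proof.
move=> Tt; rewrite /in_BSCC => /forallPn [r]; rewrite negb_imply => /andP [qr nrq].
have /connectP [pth pok rl] : connect (Xedge A) t r by exact: connect_trans Tt qr.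
case: (shortenP pok) rl => p' p'ok up' _ rl.
have x0 := xmin_gt0 A; have x1 := xmin_le1 A.
have sz : (size p' < #|Q|)%N.
  by have := max_card (mem (t :: p')); rewrite (card_uniqP up').
have H := u_exit p'ok; rewrite -rl in H; have {}H := H nrq.
apply: (@le_trans _ _ (u (size p') t)).
  by rewrite -(subnK (ltnW sz)); exact: u_monoD.
apply: le_trans H _; rewrite lerD2l lerN2.
by apply: ler_wiXn2l => //; [exact: ltW|exact: ltnW].
Qed.

Lemma u_decay j s : ~~ in_BSCC A q -> u (j * #|Q|) s <= (1 - xmin A ^+ #|Q|) ^+ j.
Proof.
move=> nb.
have x0 := xmin_gt0 A; have x1 := xmin_le1 A.
have r0 : 0 <= 1 - xmin A ^+ #|Q|.
  by rewrite subr_ge0; apply: exprn_ile1 => //; exact: ltW.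
have H : forall t, u #|Q| t <= (1 - xmin A ^+ #|Q|) * u 0 t.
  move=> t; case Tt : (Tq t).
    by rewrite /= Tt mulr1; exact: u_k.
  by rewrite u_T ?Tt // /= Tt mulr0.
elim: j s => [|j IH] s; first by rewrite mul0n expr0; exact: u_le1.
rewrite mulSn addnC exprS; apply: le_trans (u_shift r0 H _ _) _.
by apply: ler_wpM2l => //; exact: IH.
Qed.

Lemma geom_le (r : rat) J : 0 <= r < 1 -> \sum_(0 <= j < J) r ^+ j <= (1 - r)^-1.
Proof.
case/andP => r0 r1.
have E : (1 - r) * \sum_(0 <= j < J) r ^+ j = 1 - r ^+ J.
  elim: J => [|J IH]; first by rewrite big_geq // mulr0 expr0 subrr.
  by rewrite big_nat_recr //= mulrDr IH exprS; ring.
have r1' : 0 < 1 - r by rewrite subr_gt0.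
rewrite -(ler_pM2l r1') E mulfV ?gt_eqF // lerBlDr lerDl.
exact: exprn_ge0.
Qed.

Lemma u_sum N s : ~~ in_BSCC A q ->
  \sum_(0 <= n < N) u n s <= #|Q|%:R / xmin A ^+ #|Q|.
Proof.
move=> nb; set k := #|Q|; set rho := 1 - xmin A ^+ k.
have x0 := xmin_gt0 A; have x1 := xmin_le1 A.
have k0 : (0 < k)%N by apply/card_gt0P; exists s.
have r0 : 0 <= rho.
  by rewrite subr_ge0; apply: exprn_ile1 => //; exact: ltW.
have G : forall J, \sum_(0 <= n < J * k) u n s <= k%:R * \sum_(0 <= j < J) rho ^+ j.
  elim=> [|J IH]; first by rewrite mul0n !big_geq // mulr0.
  rewrite (big_cat_nat (n := J * k)) //=; last by rewrite leq_mul2r leqnSn orbT.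
  rewrite big_nat_recr //= mulrDr; apply: lerD => //.
  rewrite -[X in \sum_(X <= _ < _) _](add0n (J * k)) big_addn.
  apply: le_trans (_ : \sum_(0 <= i < J.+1 * k - J * k) rho ^+ J <= _).
    apply: ler_sum => i _; apply: le_trans (u_monoD _ _ _) _; exact: u_decay.
  by rewrite sumr_const_nat subn0 mulSn addnK mulr_natl.
apply: le_trans (_ : \sum_(0 <= n < N * k) u n s <= _).
  rewrite [X in _ <= X](big_cat_nat (n := N)) //=; last by rewrite leq_pmulr.
  by rewrite lerDl; apply: sumr_ge0 => i _; exact: u_ge0.
apply: le_trans (G N) _.
apply: ler_wpM2l; first exact: ler0n.
have -> : xmin A ^+ k = 1 - rho by rewrite /rho opprB addrC subrK.
apply: geom_le; rewrite r0 /rho /=.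
by rewrite gtrDl oppr_lt0 exprn_gt0.
Qed.


Lemma hit_nT n s i : ~~ Tq s -> hit A q n s i = 0.
Proof. by move=> nT; apply/eqP; apply: contraNT nT; exact: hit_T. Qed.

Lemma tail_le N n s i : \sum_(0 <= m < N) hit A q (m + n) s i <= u n s.
Proof.
case Ts : (Tq s); last first.
  by rewrite big1 ?u_T ?Ts // => m _; rewrite hit_nT ?Ts.
elim: n s i Ts => [|n IH] s i Ts.
  by rewrite /= Ts; under eq_bigr do rewrite addn0; exact: hit_tot.
under eq_bigr do rewrite addnS.
rewrite (sum_hitS A q N s i (fun m => m + n)) /= Ts mul1r.
case: ifP => _; last by apply: sumr_ge0 => t _; apply: mulr_ge0; [exact: Xmat_ge0|exact: u_ge0].
rewrite /Xmat; under [X in _ <= X]eq_bigr do rewrite mulr_suml.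
rewrite [X in _ <= X]exchange_big /=; apply: ler_sum => c _; apply: ler_sum => t _.
apply: ler_wpM2l; first exact: Pp_ge0.
case Tt : (Tq t); first exact: IH.
by rewrite big1 ?u_T ?Tt // => m _; rewrite hit_nT ?Tt.
Qed.


Lemma wsum_le N s i : ~~ in_BSCC A q ->
  \sum_(0 <= m < N) m%:R * hit A q m s i <= #|Q|%:R / xmin A ^+ #|Q|.
Proof.
move=> nb.
have E1 : \sum_(0 <= m < N) m%:R * hit A q m s i =
          \sum_(0 <= m < N) \sum_(0 <= n < N | (n < m)%N) hit A q m s i.
  rewrite big_nat_cond [RHS]big_nat_cond; apply: eq_bigr => m /andP [/andP [_ mN] _].
  have -> : m%:R * hit A q m s i = \sum_(0 <= n < m) hit A q m s i.
    by rewrite sumr_const_nat subn0 mulr_natl.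
  by rewrite (big_nat_widen _ _ _ _ _ (ltnW mN)).
rewrite E1; under eq_bigr do rewrite big_mkcond.
rewrite exchange_big_nat /=; under eq_bigr do rewrite -big_mkcond /=.
apply: (@le_trans _ _ (\sum_(0 <= n < N) u n.+1 s)).
  apply: ler_sum => n _.
  have -> : \sum_(0 <= m < N | (n < m)%N) hit A q m s i =
            \sum_(n.+1 <= m < N) hit A q m s i.
    by rewrite (big_nat_widenl _ _ _ _ _ (leq0n n.+1)).
  rewrite -[X in \sum_(X <= _ < _) _](add0n n.+1) big_addn.
  apply: (@le_trans _ _ (\sum_(0 <= j < N) hit A q (j + n.+1) s i)); last exact: tail_le.
  case: (leqP (N - n.+1) N) => [le|]; last by rewrite ltnNge leq_subr.
  rewrite [X in _ <= X](big_cat_nat (n := N - n.+1)) //=.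
  by rewrite lerDl; apply: sumr_ge0 => j _; exact: hit_ge0.
apply: le_trans (u_sum N.+1 s nb).
rewrite big_nat_recl // lerDr; exact: u_ge0.
Qed.

End U.

Section Comb.
Variables (Q : finType) (A : pOC Q).

Inductive hdesc : Q -> Q -> nat -> nat -> Prop :=
| hd1 s t h : 0 < Pp A s (-1) t -> (0 < h)%N -> hdesc s t 1 h
| hd0 s s' t n h : 0 < Pp A s 0 s' -> hdesc s' t n h -> hdesc s t n.+1 h
| hd2 s s' u t n1 n2 h1 h : 0 < Pp A s 1 s' -> hdesc s' u n1 h1 -> hdesc u t n2 h ->
    (h1 < h)%N -> hdesc s t (n1 + n2).+1 h.

Lemma hdesc_h s t n h : hdesc s t n h -> (0 < h)%N.
Proof. by elim => // *; apply: leq_ltn_trans (leq0n _) _; eauto. Qed.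

Lemma hdesc_w s t n h h' : hdesc s t n h -> (h <= h')%N -> hdesc s t n h'.
Proof.
move=> H; elim: H h' => {s t n h} [s t h P h0|s s' t n h P _ IH|s s' u t n1 n2 h1 h P H1 _ H2 IH2 lt] h' le.
- by apply: hd1 => //; apply: leq_trans le.
- by apply: hd0 P (IH _ le).
- by apply: hd2 P H1 (IH2 _ le) (leq_trans lt le).
Qed.

Inductive descN : Q -> nat -> Q -> nat -> Prop :=
| dN0 s : descN s 0 s 0
| dNS s u t i n1 n2 h : hdesc s u n1 h -> descN u i t n2 -> descN s i.+1 t (n1 + n2).

Lemma descN_inv s i t n : descN s i.+1 t n ->
  exists u n1 n2 h, [/\ hdesc s u n1 h, descN u i t n2 & n = (n1 + n2)%N].
Proof. by move=> H; inversion H; subst; do 4 eexists; split; eauto. Qed.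

Lemma descN0_inv s t n : descN s 0 t n -> s = t /\ n = 0%N.
Proof. by move=> H; inversion H. Qed.

Lemma prod_pos (a b : rat) : 0 <= a -> 0 <= b -> 0 < a * b -> 0 < a /\ 0 < b.
Proof.
move=> a0 b0 ab; split; rewrite lt_neqAle ?a0 ?b0 andbT; apply/eqP => E;
  by move: ab; rewrite -E ?mul0r ?mulr0 ltxx.
Qed.

Lemma sum_pos (T : eqType) (r : seq T) (F : T -> rat) :
  0 < \sum_(i <- r) F i -> exists2 i, i \in r & F i != 0.
Proof. by move=> H; apply: sum_neq0; rewrite gt_eqF. Qed.

Lemma hit_descN q n s (i : nat) : 0 < hit A q n s i%:Z -> descN s i q n.
Proof.
elim: n s i => [|n IH] s i /=.
  move=> H; have : (s == q) && (i%:Z == 0).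
    by move: H; case: (_ && _) => //=; rewrite ltxx.
  by case/andP => /eqP -> /eqP; case: i {H} => // _; exact: dN0.
case: ifP => [ipos|]; last by rewrite ltxx.
case: i ipos => [|i] // _.
move/sum_pos => [c cm /sum_neq0 [t _ H]].
have H0 : 0 <= Pp A s c t * hit A q n t (i.+1%:Z + c).
  by apply: mulr_ge0; [exact: Pp_ge0|exact: hit_ge0].
have [Pc Hh] : 0 < Pp A s c t /\ 0 < hit A q n t (i.+1%:Z + c).
  by apply: prod_pos; [exact: Pp_ge0|exact: hit_ge0|rewrite lt_neqAle eq_sym H H0].
move: cm Pc Hh; rewrite !inE => /or3P [/eqP->|/eqP->|/eqP->] Pc Hh.
- have E : i.+1%:Z + -1 = i%:Z by lia.
  rewrite E in Hh; have := dNS (hd1 Pc (ltn0Sn 0)) (IH _ _ Hh).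
  by rewrite add1n.
- rewrite addr0 in Hh; have [u [n1 [n2 [h [H1 H2 ->]]]]] := descN_inv (IH _ _ Hh).
  by have := dNS (hd0 Pc H1) H2; rewrite addSn.
- have E : i.+1%:Z + 1 = i.+2%:Z by lia.
  rewrite E in Hh; have [u [n1 [n2 [h [H1 H2 ->]]]]] := descN_inv (IH _ _ Hh).
  have [v [m1 [m2 [g [G1 G2 ->]]]]] := descN_inv H2.
  have H3 := hd2 Pc H1 (hdesc_w G1 (leq_maxr h.+1 g)) (leq_maxl h.+1 g).
  by have := dNS H3 G2; rewrite addnA addSn.
Qed.

Lemma hit_desc q n p : 0 < hit A q n p 1 -> exists h, hdesc p q n h.
Proof.
move/(hit_descN (i := 1)) => /descN_inv [u [n1 [n2 [h [H1 /descN0_inv [E1 E2] E3]]]]].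
by subst; exists h; rewrite addn0.
Qed.

Definition Dset n : {set Q * Q} :=
  [set x | `[< exists m h, (m <= n)%N /\ hdesc x.1 x.2 m h >]].

Lemma in_Dset x n : x \in Dset n <-> exists m h, (m <= n)%N /\ hdesc x.1 x.2 m h.
Proof. by rewrite inE; split => /asboolP. Qed.

Lemma Dset_mono n n' : (n <= n')%N -> Dset n \subset Dset n'.
Proof.
move=> le; apply/fintype.subsetP => x /in_Dset [m [h [lm H]]]; apply/in_Dset.
by exists m, h; split => //; exact: leq_trans le.
Qed.

Lemma hbound n : forall s t h, hdesc s t n h ->
  (forall m h', (m < n)%N -> ~ hdesc s t m h') ->
  exists2 h', hdesc s t n h' & (h' <= #|Dset n|)%N.
Proof.
elim/ltn_ind: n => n IHn s t h H; move: IHn; case: H.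
- move=> {}s {}t {}h P h0 _ _; exists 1%N; first exact: hd1.
  apply/fintype.card_gt0P; exists (s, t); apply/in_Dset; exists 1%N, h; split => //; exact: hd1.
- move=> {}s s' {}t k {}h P H IHn Hmin.
  have [g G gb] : exists2 g, hdesc s' t k g & (g <= #|Dset k|)%N.
    apply: (IHn k (ltnSn k) _ _ _ H) => m h' lt H'.
    by apply: (Hmin m.+1 h') => //; exact: hd0 P H'.
  exists g; first exact: hd0 P G.
  by apply: leq_trans gb _; apply: subset_leq_card; apply: Dset_mono.
- move=> {}s s' u {}t n1 n2 h1 {}h P H1 H2 lt IHn Hmin.
  have [g1 G1 gb1] : exists2 g, hdesc s' u n1 g & (g <= #|Dset n1|)%N.
    apply: (IHn n1 _ _ _ _ H1); first by rewrite ltnS leq_addr.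
    move=> m h' lm H'; apply: (Hmin (m + n2).+1 (maxn h'.+1 h)).
      by rewrite ltnS ltn_add2r.
    exact: hd2 P H' (hdesc_w H2 (leq_maxr _ _)) (leq_maxl _ _).
  have [g2 G2 gb2] : exists2 g, hdesc u t n2 g & (g <= #|Dset n2|)%N.
    apply: (IHn n2 _ _ _ _ H2); first by rewrite ltnS leq_addl.
    move=> m h' lm H'; apply: (Hmin (n1 + m).+1 (maxn h1.+1 h')).
      by rewrite ltnS ltn_add2l.
    exact: hd2 P H1 (hdesc_w H' (leq_maxr _ _)) (leq_maxl _ _).
  exists (maxn g1.+1 g2).
    exact: hd2 P G1 (hdesc_w G2 (leq_maxr _ _)) (leq_maxl _ _).
  rewrite geq_max; apply/andP; split.
    apply: leq_ltn_trans gb1 _; apply: proper_card; apply/properP; split.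
      by apply: Dset_mono; lia.
    exists (s, t).
      apply/in_Dset; exists (n1 + n2).+1, h; split => //.
      exact: hd2 P H1 H2 lt.
    apply/negP => /in_Dset [m [h' [lm H']]]; apply: (Hmin m h') => //.
    by apply: leq_ltn_trans lm _; rewrite ltnS leq_addr.
  apply: leq_trans gb2 _; apply: subset_leq_card; apply: Dset_mono.
  lia.
Qed.

Lemma Dset_card n : (#|Dset n| <= #|Q| ^ 2)%N.
Proof. by apply: leq_trans (max_card _) _; rewrite card_prod expnS expn1. Qed.

Definition step : rel (Q * int) :=
  fun x y => (0 < x.2) && (0 < Pp A x.1 (y.2 - x.2) y.1).

Lemma flatten s t n h : hdesc s t n h -> forall i : int, 0 < i ->
  exists cs, [/\ size cs = n, path step (s, i) cs, last (s, i) cs = (t, i - 1)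
    & all (fun y : Q * int => y.2 <= i - 1 + h%:Z) cs].
Proof.
elim => {s t n h} [s t h P h0|s s' t n h P H IH|s s' u t n1 n2 h1 h P H1 IH1 H2 IH2 lt] i ip.
- exists [:: (t, i - 1)]; split => //=.
    by rewrite /step /= ip andbT; have -> : i - 1 - i = -1 by lia.
  by rewrite andbT; lia.
- have [cs [sz pth lst al]] := IH i ip.
  have h1 := hdesc_h H.
  exists ((s', i) :: cs); split => //=; first by rewrite sz.
    by rewrite /step /= ip subrr P.
  by rewrite al andbT; lia.
- have [cs1 [sz1 pth1 lst1 al1]] := IH1 (i + 1) ltac:(lia).
  have [cs2 [sz2 pth2 lst2 al2]] := IH2 i ip.
  have g1 := hdesc_h H1.
  have E : i + 1 - 1 = i by lia.
  rewrite E in lst1.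
  exists ((s', i + 1) :: cs1 ++ cs2); split => /=.
  + by rewrite size_cat sz1 sz2.
  + rewrite cat_path pth1 lst1 pth2 /step /= ip andbT andTb.
    by have -> : i + 1 - i = 1 by lia.
  + by rewrite last_cat lst1.
  + rewrite all_cat; apply/andP; split; first lia.
    apply/andP; split.
      apply/allP => y yc; have := allP al1 y yc; lia.
    exact: al2.
Qed.

Lemma hit_lower q cs s i : path step (s, i) cs -> last (s, i) cs = (q, 0) ->
  xmin A ^+ size cs <= hit A q (size cs) s i.
Proof.
elim: cs s i => [|[t j] cs IH] s i /=.
  by move=> _ [-> ->]; rewrite !eqxx expr0.
case/andP => /andP [/= ip P] pth lst.
have H := IH _ _ pth lst.
rewrite ip.
have cm : j - i \in pos_moves by apply: (@Pp_supp _ A s _ t); rewrite gt_eqF.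
have x0 := xmin_gt0 A.
rewrite (bigD1_seq (j - i)) //= (bigD1 t) //=.
have E : i + (j - i) = j by lia.
rewrite E exprS.
apply: le_trans (_ : Pp A s (j - i) t * hit A q (size cs) t j <= _).
  apply: ler_pM => //; [exact: ltW|exact: exprn_ge0 (ltW x0)|exact: xmin_le].
rewrite -addrA lerDl; apply: addr_ge0.
  by apply: sumr_ge0 => t' _; apply: mulr_ge0; [exact: Pp_ge0|exact: hit_ge0].
by apply: sumr_ge0 => c _; apply: sumr_ge0 => t' _; apply: mulr_ge0; [exact: Pp_ge0|exact: hit_ge0].
Qed.

Lemma belast_pos x cs : path step x cs -> all (fun y : Q * int => 0 < y.2) (belast x cs).
Proof.
elim: cs x => [|y cs IH] x /=; first by [].
by case/andP => /andP [-> _] /IH ->.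
Qed.

Lemma short p q n h H : hdesc p q n h -> (h <= H)%N ->
  exists m, (m <= #|Q| * H)%N /\ xmin A ^+ m <= hit A q m p 1.
Proof.
move=> D hH; have h0 := hdesc_h D.
have [cs [_ pth lst al]] := flatten D (ltr01 : (0 : int) < 1).
rewrite subrr in lst.
case: (shortenP pth) lst => p' pth' up sub lst.
exists (size p'); split; last exact: hit_lower.
case: H hH => [|H'] hH; first by rewrite leqn0 in hH; rewrite (eqP hH) in h0.
set L := belast (p, 1) p'.
have szL : size L = size p' by rewrite size_belast.
rewrite lastI rcons_uniq in up; case/andP: up => _ uL.
have Lpos := allP (belast_pos pth').
have Lub : forall y, y \in belast (p, 1) p' -> y.2 <= H'.+1%:Z.
  move=> y /mem_belast; rewrite inE => /orP [/eqP -> /=|/sub yc]; first lia.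
  by move/(allP al): yc => /= ?; lia.
pose f (y : Q * int) : Q * 'I_H'.+1 := (y.1, inord `|y.2 - 1|%N).
have fi : {in belast (p, 1) p' &, injective f}.
  move=> [y1 y2] [z1 z2] yL zL [E1 E2]; rewrite E1; congr pair.
  have := Lpos _ yL; have := Lpos _ zL; have := Lub _ yL; have := Lub _ zL => /= *.
  have : `|y2 - 1|%N = `|z2 - 1|%N.
    by rewrite -(@inordK H' `|y2 - 1|%N) ?E2 ?inordK //; lia.
  lia.
have := max_card (mem (map f (belast (p, 1) p'))).
rewrite (card_uniqP _); last by rewrite map_inj_in_uniq.
by rewrite size_map size_belast card_prod card_ord.
Qed.

End Comb.

Local Open Scope ereal_scope.

Lemma series_le (R : realType) (u : nat -> R) (B : R) : (forall n, (0 <= u n)%R) ->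
  (forall N, (\sum_(0 <= n < N) u n <= B)%R) -> \sum_(0 <= n <oo) (u n)%:E <= B%:E.
Proof.
move=> u0 uB; apply: lime_le.
  by apply: is_cvg_nneseries => n _ _; rewrite lee_fin.
by apply: nearW => N; rewrite sumEFin lee_fin.
Qed.

Lemma series_ge (R : realType) (u : nat -> R) m : (forall n, (0 <= u n)%R) ->
  (u m)%:E <= \sum_(0 <= n <oo) (u n)%:E.
Proof.
move=> u0; apply: le_trans (nneseries_lim_ge m.+1 _); last by move=> n _ _; rewrite lee_fin.
rewrite big_nat_recr //= sumEFin -EFinD lee_fin lerDr.
by apply: sumr_ge0 => i _.
Qed.

Lemma fin_between (R : realType) (x : \bar R) (b : R) : 0 <= x -> x <= b%:E -> x = (fine x)%:E.
Proof.
move=> x0 xb; rewrite fineK // ge0_fin_numE //.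
by apply: le_lt_trans xb _; exact: ltry.
Qed.

Local Close Scope ereal_scope.
Unset Implicit Arguments.

Theorem mainTheorem4 (R : realType) (Q : finType) (A : pOC Q) (p q : Q) :
  (0 < @prob_down Q A R p q)%E ->
  ~~ in_BSCC A q ->
  (@exp_down Q A R p q <=
     ((5 * #|Q|%:R) / ratr (xmin A) ^+ (#|Q| + #|Q| ^ 3))%:E)%E.
Proof.
move=> Ppos nb.
set k := #|Q|.
have x0 := xmin_gt0 A; have x1 := xmin_le1 A.
have h0 : forall n, (0 <= ratr (hit A q n p 1) :> R)%R by move=> n; rewrite ler0q hit_ge0.
have [n hn] : exists n, (0 < hit A q n p 1)%R.
  case: (pselect (exists n, (0 < hit A q n p 1)%R)) => // nex.
  move: Ppos; rewrite /prob_down eseries0 ?ltxx // => i _ _.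
  have : hit A q i p 1 = 0%R.
    apply/eqP; rewrite eq_le hit_ge0 andbT leNgt; apply/negP => H; apply: nex.
    by exists i.
  by move=> ->; rewrite rmorph0.
have exP : exists m, `[< exists h, hdesc A p q m h >].
  by have [h D] := hit_desc hn; exists n; apply/asboolP; exists h.
case: (ex_minnP exP) => n0 /asboolP [h D] Hmin.
have [h' D' hb] : exists2 h', hdesc A p q n0 h' & (h' <= #|Dset A n0|)%N.
  apply: (hbound D) => m g lt Dm.
  have := Hmin m (asboolT (ex_intro _ g Dm)); rewrite leqNgt lt //.
have [m [mb mh]] := short D' (leq_trans hb (Dset_card A n0)).
have mk : (m <= k ^ 3)%N by rewrite expnS.
have xm : (xmin A ^+ (k ^ 3) <= hit A q m p 1)%R.
  apply: le_trans mh; apply: ler_wiXn2l => //; exact: ltW.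
set y := ratr (xmin A) : R.
have y0 : (0 < y)%R by rewrite /y ltr0q.
have Pge : ((y ^+ (k ^ 3))%:E <= prob_down A p q)%E.
  rewrite /prob_down; apply: le_trans (series_ge m h0); rewrite lee_fin /y -rmorphXn ler_rat //.
have Ple : (@prob_down Q A R p q <= 1%:E)%E.
  rewrite /prob_down; apply: series_le => // N; rewrite -rmorph_sum -(rmorph1 (@ratr R)) ler_rat.
  exact: hit_tot.
have Sge0 : forall n, (0 <= n%:R * ratr (hit A q n p 1) :> R)%R.
  by move=> i; apply: mulr_ge0.
have Sle : (\sum_(0 <= n <oo) ((n%:R * ratr (hit A q n p 1)) : R)%:E <=
            (ratr (k%:R / xmin A ^+ k) : R)%:E)%E.
  apply: series_le => // N.
  under eq_bigr do rewrite -(ratr_nat R) -rmorphM.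
  by rewrite -rmorph_sum ler_rat; exact: wsum_le.
have S0 : (0 <= \sum_(0 <= n <oo) ((n%:R * ratr (hit A q n p 1)) : R)%:E)%E.
  by apply: le_trans (series_ge 0 Sge0); rewrite lee_fin.
have P0 : (0 <= @prob_down Q A R p q)%E by apply: ltW.
rewrite /exp_down (fin_between S0 Sle) (fin_between P0 Ple) /= -EFinM lee_fin.
set fS := fine _; set fP := fine _.
have fPge : (y ^+ (k ^ 3) <= fP)%R.
  by rewrite -lee_fin /fP -(fin_between P0 Ple).
have fSle : (fS <= k%:R / y ^+ k)%R.
  rewrite -lee_fin /fS -(fin_between S0 Sle).
  by apply: le_trans Sle _; rewrite lee_fin rmorphM fmorphV rmorphXn rmorph_nat.
have fS0 : (0 <= fS)%R by rewrite -lee_fin /fS -(fin_between S0 Sle).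
have yk0 : (0 < y ^+ (k ^ 3))%R by exact: exprn_gt0.
have fP0 : (0 < fP)%R by apply: lt_le_trans fPge.
rewrite ler_pdivrMr //.
apply: le_trans fSle _.
apply: le_trans (_ : 5%:R * k%:R / y ^+ (k + k ^ 3) * y ^+ (k ^ 3) <= _)%R; last first.
  by apply: ler_wpM2l => //; apply: divr_ge0; [apply: mulr_ge0|apply: exprn_ge0; exact: ltW].
rewrite exprD invfM mulrA -mulrA mulVf ?gt_eqF // mulr1.
apply: ler_wpM2r; first by rewrite invr_ge0 exprn_ge0 // ltW.
by rewrite ler_peMl // ler1n.
Qed.
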